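(* Let $M$ be a $\lambda$-term, $V$ a value and $x$ a variable. Then $$\mathcal T(M\{x:=V\})=\bigcup_{t\in\mathcal T(M)}\ \bigcup_{[v_1,\dots,v_n]\in\mathcal T(V)} t\langle x:=v_1,\dots,v_n\rangle.$$
   Context: $\lambda$-terms and values are $M::=V\mid MN$, $V::=x\mid\lambda x.M$, up to $\alpha$-conversion; $M\{x:=V\}$ is capture-avoiding substitution. Resource calculus: resource values $v::=x\mid\lambda x.t$; simple terms $s,t::=st\mid[v_1,\dots,v_k]$ ($k\ge0$, bags are finite multisets); $[x^n]$ is $n$ copies of $x$. Linear substitution: if $x$ has exactly $n$ free occurrences in $e$, enumerated $x_1,\dots,x_n$, then $e\langle x:=v_1,\dots,v_n\rangle=\{e[x_1:=v_{\pi(1)},\dots,x_n:=v_{\pi(n)}]\mid\pi\text{ a permutation of }\{1,\dots,n\}\}$ (replacing the $i$-th occurrence by $v_{\pi(i)}$); otherwise it is $\emptyset$. Taylor expansion: $\mathcal T(x)=\{[x^n]\mid n\ge0\}$, $\mathcal T(\lambda x.N)=\{[\lambda x.t_1,\dots,\lambda x.t_n]\mid n\ge0,\ t_i\in\mathcal T(N)\}$, $\mathcal T(PQ)=\{st\mid s\in\mathcal T(P),t\in\mathcal T(Q)\}$. *)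

(* Defs.v *)
(* Terms are represented with de Bruijn indices (this is the
   standard rendering of terms "up to alpha-conversion"); bags are lists,
   and sets of simple terms are compared modulo bag reordering (req_t). *)
From Stdlib Require Import List Permutation Arith.
Import ListNotations.

Inductive lterm : Type :=
| Var : nat -> lterm
| Lam : lterm -> lterm
| App : lterm -> lterm -> lterm.

Definition is_value (M : lterm) : Prop :=
  match M with Var _ | Lam _ => True | App _ _ => False end.

Fixpoint lshift (c : nat) (M : lterm) : lterm :=
  match M with
  | Var y => Var (if c <=? y then S y else y)
  | Lam N => Lam (lshift (S c) N)
  | App P Q => App (lshift c P) (lshift c Q)
  end.

Fixpoint lsubst (x : nat) (V : lterm) (M : lterm) : lterm :=
  match M with
  | Var y => if Nat.eqb y x then V else Var y
  | Lam N => Lam (lsubst (S x) (lshift 0 V) N)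
  | App P Q => App (lsubst x V P) (lsubst x V Q)
  end.

Inductive rterm : Type :=
| RApp : rterm -> rterm -> rterm
| RBag : list rval -> rterm
with rval : Type :=
| RVar : nat -> rval
| RLam : rterm -> rval.

Fixpoint rshift_t (c : nat) (t : rterm) : rterm :=
  match t with
  | RApp s u => RApp (rshift_t c s) (rshift_t c u)
  | RBag b => RBag (map (rshift_v c) b)
  end
with rshift_v (c : nat) (v : rval) : rval :=
  match v with
  | RVar y => RVar (if c <=? y then S y else y)
  | RLam t => RLam (rshift_t (S c) t)
  end.

Inductive req_t : rterm -> rterm -> Prop :=
| req_app s s' t t' : req_t s s' -> req_t t t' -> req_t (RApp s t) (RApp s' t')
| req_bag b b' c : Permutation b b' -> req_b b' c -> req_t (RBag b) (RBag c)
with req_b : list rval -> list rval -> Prop :=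
| reqb_nil : req_b [] []
| reqb_cons v v' b b' : req_v v v' -> req_b b b' -> req_b (v :: b) (v' :: b')
with req_v : rval -> rval -> Prop :=
| reqv_var y : req_v (RVar y) (RVar y)
| reqv_lam t t' : req_t t t' -> req_v (RLam t) (RLam t').

Definition set_eq_mod (A B : rterm -> Prop) : Prop :=
  forall s, (exists s', req_t s s' /\ A s') <-> (exists s', req_t s s' /\ B s').

(* LS_t k vs e e' : e' is e with its free occurrences of variable k,
   enumerated left to right, replaced respectively by vs = [v_1;...;v_n]
   (in order); the list must have exactly as many entries as occurrences. *)
Inductive LS_t : nat -> list rval -> rterm -> rterm -> Prop :=
| ls_app k vs1 vs2 s s' t t' :
    LS_t k vs1 s s' -> LS_t k vs2 t t' -> LS_t k (vs1 ++ vs2) (RApp s t) (RApp s' t')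
| ls_bag k vs b b' : LS_b k vs b b' -> LS_t k vs (RBag b) (RBag b')
with LS_b : nat -> list rval -> list rval -> list rval -> Prop :=
| lsb_nil k : LS_b k [] [] []
| lsb_cons k vs1 vs2 u u' b b' :
    LS_v k vs1 u u' -> LS_b k vs2 b b' -> LS_b k (vs1 ++ vs2) (u :: b) (u' :: b')
with LS_v : nat -> list rval -> rval -> rval -> Prop :=
| lsv_hit k v : LS_v k [v] (RVar k) v
| lsv_var k y : y <> k -> LS_v k [] (RVar y) (RVar y)
| lsv_lam k vs t t' :
    LS_t (S k) (map (rshift_v 0) vs) t t' -> LS_v k vs (RLam t) (RLam t').

(* e<x := v_1,...,v_n> = { e[x_1:=v_pi(1),...,x_n:=v_pi(n)] | pi permutation } *)
Definition lin_subst (e : rterm) (x : nat) (vs : list rval) : rterm -> Prop :=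
  fun e' => exists vs', Permutation vs vs' /\ LS_t x vs' e e'.

Fixpoint taylor (M : lterm) : rterm -> Prop :=
  match M with
  | Var y => fun s => exists n, s = RBag (repeat (RVar y) n)
  | Lam N => fun s => exists ts, Forall (taylor N) ts /\ s = RBag (map RLam ts)
  | App P Q => fun s => exists s1 t1, s = RApp s1 t1 /\ taylor P s1 /\ taylor Q t1
  end.

(* Main.v *)
Require Import Defs.
From Stdlib Require Import List Permutation Arith Lia.
Import ListNotations.

Lemma tv_forall V vs : is_value V ->
  (taylor V (RBag vs) <-> Forall (fun v => taylor V (RBag [v])) vs).
Proof.
  destruct V as [y|N|P Q]; simpl; intros HV; try contradiction.
  - split.
    + intros [n Hn]. injection Hn as ->. induction n; simpl; constructor; auto.
      exists 1; reflexivity.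
    + induction vs as [|v vs IH]; intros HF.
      * exists 0; reflexivity.
      * inversion HF as [|? ? [n Hn] HF']; subst.
        destruct n as [|[|n]]; simpl in Hn; try discriminate.
        injection Hn as ->. destruct (IH HF') as [m Hm]. injection Hm as ->.
        exists (S m); reflexivity.
  - split.
    + intros [ts [Hts Hvs]]. injection Hvs as ->. induction Hts; simpl; constructor; auto.
      exists [x]; split; auto.
    + induction vs as [|v vs IH]; intros HF.
      * exists []; split; auto.
      * inversion HF as [|? ? [ts [Hts Hn]] HF']; subst.
        destruct ts as [|t [|t' ts]]; simpl in Hn; try discriminate.
        injection Hn as ->. destruct (IH HF') as [ts' [Hts' Hm]]. injection Hm as ->.
        inversion Hts; subst.
        exists (t :: ts'); split; auto.
Qed.

Lemma tv_nil V : is_value V -> taylor V (RBag []).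
Proof. intros HV; apply tv_forall; auto. Qed.

Lemma tv_app V a b : is_value V -> taylor V (RBag a) -> taylor V (RBag b) -> taylor V (RBag (a ++ b)).
Proof. intros HV Ha Hb; apply tv_forall in Ha; apply tv_forall in Hb; auto; apply tv_forall; auto.
  apply Forall_app; auto. Qed.

Lemma tv_split V a b : is_value V -> taylor V (RBag (a ++ b)) -> taylor V (RBag a) /\ taylor V (RBag b).
Proof. intros HV H; apply tv_forall in H; auto; apply Forall_app in H as [H1 H2];
  split; apply tv_forall; auto. Qed.

Lemma tv_perm V a b : is_value V -> Permutation a b -> taylor V (RBag a) -> taylor V (RBag b).
Proof. intros HV Hp H; apply tv_forall in H; auto; apply tv_forall; auto.
  rewrite Forall_forall in *. intros v Hv. apply H. apply Permutation_in with b; auto.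
  symmetry; auto. Qed.

Lemma tv_bag V s : is_value V -> taylor V s -> exists vs, s = RBag vs.
Proof. destruct V; simpl; intros HV H; try contradiction.
  - destruct H as [k ->]; eauto.
  - destruct H as [ts [_ ->]]; eauto. Qed.

Lemma shift_value c V : is_value V -> is_value (lshift c V).
Proof. destruct V; simpl; auto. Qed.

Lemma taylor_shift M : forall c s', taylor (lshift c M) s' <-> exists s, taylor M s /\ s' = rshift_t c s.
Proof.
  induction M as [y|N IH|P IHP Q IHQ]; intros c s'; simpl.
  - split.
    + intros [n ->]. exists (RBag (repeat (RVar y) n)). split; [eauto|].
      simpl. rewrite map_repeat. reflexivity.
    + intros [s [[n ->] ->]]. exists n. simpl. rewrite map_repeat. reflexivity.
  - split.
    + intros [ts' [Hts ->]].
      assert (exists ts, Forall (taylor N) ts /\ ts' = map (rshift_t (S c)) ts) as [ts [H1 H2]].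
      { induction Hts as [|t ts' Ht Hts IHl].
        - exists []; auto.
        - destruct IHl as [ts [H1 H2]]. apply IH in Ht as [t0 [Ht0 ->]].
          exists (t0 :: ts); subst; simpl; auto. }
      subst. exists (RBag (map RLam ts)). split; eauto.
      simpl. rewrite !map_map. reflexivity.
    + intros [s [[ts [Hts ->]] ->]]. exists (map (rshift_t (S c)) ts). split.
      * rewrite Forall_map. eapply Forall_impl; [|exact Hts]. intros t Ht. apply IH; eauto.
      * simpl. rewrite !map_map. reflexivity.
  - split.
    + intros [s1 [t1 [-> [H1 H2]]]]. apply IHP in H1 as [a [Ha ->]]. apply IHQ in H2 as [b [Hb ->]].
      exists (RApp a b). split; [eauto|reflexivity].
    + intros [s [[s1 [t1 [-> [H1 H2]]]] ->]]. simpl. exists (rshift_t c s1), (rshift_t c t1).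
      split; auto. split; [apply IHP|apply IHQ]; eauto.
Qed.

Lemma tv_shift c V ws : is_value V ->
  taylor (lshift c V) (RBag ws) <-> exists vs, ws = map (rshift_v c) vs /\ taylor V (RBag vs).
Proof.
  intros HV. destruct V as [y|N|]; simpl in *; try contradiction.
  - split.
    + intros [n Hn]. injection Hn as ->. exists (repeat (RVar y) n). rewrite map_repeat. eauto.
    + intros [vs [-> [n Hn]]]. injection Hn as ->. exists n. rewrite map_repeat. reflexivity.
  - split.
    + intros [ts' [Hts Hws]]. injection Hws as ->.
      assert (exists ts, Forall (taylor N) ts /\ ts' = map (rshift_t (S c)) ts) as [ts [H1 H2]].
      { induction Hts as [|t ts' Ht Hts IHl].
        - exists []; auto.
        - destruct IHl as [ts [H1 H2]]. apply taylor_shift in Ht as [t0 [Ht0 ->]].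
          exists (t0 :: ts); subst; simpl; auto. }
      subst. exists (map RLam ts). split; [|eauto]. rewrite !map_map. reflexivity.
    + intros [vs [-> [ts [Hts Hvs]]]]. injection Hvs as ->.
      exists (map (rshift_t (S c)) ts). split.
      * rewrite Forall_map. eapply Forall_impl; [|exact Hts]. intros t Ht. apply taylor_shift; eauto.
      * rewrite !map_map. reflexivity.
Qed.
Lemma ls_rep_x x vs : LS_b x vs (repeat (RVar x) (length vs)) vs.
Proof. induction vs as [|v vs IH]; simpl. constructor.
  exact (lsb_cons x [v] vs _ _ _ _ (lsv_hit x v) IH). Qed.

Lemma ls_rep_y x y n : y <> x -> LS_b x [] (repeat (RVar y) n) (repeat (RVar y) n).
Proof. intros H; induction n; simpl. constructor.
  exact (lsb_cons x [] [] _ _ _ _ (lsv_var x y H) IHn). Qed.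

Lemma inv_rep x y n : forall vs b', LS_b x vs (repeat (RVar y) n) b' ->
  (y = x -> b' = vs) /\ (y <> x -> vs = [] /\ b' = repeat (RVar y) n).
Proof. induction n; simpl; intros vs b' H; inversion H; subst.
  - split; auto.
  - match goal with Hb : LS_b _ _ (repeat _ _) _ |- _ => apply IHn in Hb as [A B] end.
    match goal with Hv : LS_v _ _ _ _ |- _ => inversion Hv; subst end.
    + split; intros; [rewrite A; auto | congruence].
    + split; intros; [congruence|]. destruct (B H0) as [-> ->]; auto.
Qed.

Lemma main M : forall x V, is_value V -> forall u,
  taylor (lsubst x V M) u <-> exists t vs, taylor M t /\ taylor V (RBag vs) /\ LS_t x vs t u.
Proof.
  induction M as [y|N IH|P IHP Q IHQ]; intros x V HV u; simpl.
  - destruct (Nat.eqb_spec y x) as [->|Hne]; split.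
    + intros Hu. destruct (tv_bag _ _ HV Hu) as [vs ->].
      exists (RBag (repeat (RVar x) (length vs))), vs. split; [eauto|]. split; auto.
      constructor. apply ls_rep_x.
    + intros [t [vs [[n ->] [Hvs Hls]]]]. inversion Hls; subst.
      match goal with Hb : LS_b _ _ (repeat _ _) _ |- _ => apply inv_rep in Hb as [A _] end. rewrite A; auto.
    + intros [n ->]. exists (RBag (repeat (RVar y) n)), []. split; eauto. split.
      apply tv_nil; auto. constructor. apply ls_rep_y; auto.
    + intros [t [vs [[n ->] [Hvs Hls]]]]. inversion Hls; subst.
      match goal with Hb : LS_b _ _ (repeat _ _) _ |- _ => apply inv_rep in Hb as [_ B] end. destruct (B Hne) as [-> ->]. simpl; eauto.
  - assert (HV' : is_value (lshift 0 V)) by (apply shift_value; auto).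
    split.
    + intros [ts [Hts ->]].
      assert (exists ts0 vs, Forall (taylor N) ts0 /\ taylor V (RBag vs) /\
                LS_b x vs (map RLam ts0) (map RLam ts)) as [ts0 [vs [H1 [H2 H3]]]].
      { induction Hts as [|t ts Ht Hts IHl].
        - exists [], []. split; auto. split. apply tv_nil; auto. constructor.
        - destruct IHl as [ts0 [vs [H1 [H2 H3]]]].
          apply (IH (S x) (lshift 0 V) HV') in Ht as [t0 [ws [Ht0 [Hws Hls]]]].
          apply tv_shift in Hws as [vs1 [-> Hvs1]]; auto.
          exists (t0 :: ts0), (vs1 ++ vs). split; auto. split. apply tv_app; auto.
          simpl. constructor; auto. constructor. auto. }
      exists (RBag (map RLam ts0)), vs. split; eauto. split; auto. constructor; auto.
    + intros [t [vs [[ts0 [Hts0 ->]] [Hvs Hls]]]]. inversion Hls; subst.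
      match goal with Hb : LS_b _ _ _ _ |- _ => rename Hb into H3 end.
      assert (exists ts, Forall (taylor (lsubst (S x) (lshift 0 V) N)) ts /\ b' = map RLam ts)
        as [ts [H1 ->]]; eauto.
      clear Hls. revert vs b' Hvs H3. induction Hts0 as [|t0 ts0 Ht0 Hts0 IHl]; intros vs b' Hvs H.
      * inversion H; subst. exists []; auto.
      * inversion H; subst. apply tv_split in Hvs as [Hv1 Hv2]; auto.
        match goal with Hb : LS_b _ _ _ _ |- _ => destruct (IHl _ _ Hv2 Hb) as [ts [A ->]] end.
        match goal with Hb : LS_v _ _ _ _ |- _ => inversion Hb; subst end.
        assert (Ht : taylor (lsubst (S x) (lshift 0 V) N) t').
        { apply (IH (S x) (lshift 0 V) HV'). exists t0, (map (rshift_v 0) vs1).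
          split; auto. split; auto. apply tv_shift; eauto. }
        exists (t' :: ts). split; auto.
  - split.
    + intros [s1 [t1 [-> [H1 H2]]]].
      apply IHP in H1 as [a [va [Ha [Hva La]]]]; auto.
      apply IHQ in H2 as [b [vb [Hb [Hvb Lb]]]]; auto.
      exists (RApp a b), (va ++ vb). split; [eauto|]. split. apply tv_app; auto.
      constructor; auto.
    + intros [t [vs [[a [b [-> [Ha Hb]]]] [Hvs Hls]]]]. inversion Hls; subst.
      apply tv_split in Hvs as [Hv1 Hv2]; auto.
      exists s', t'. split; auto. split; [apply IHP|apply IHQ]; eauto.
Qed.

Theorem lemma4p3 (M V : lterm) (x : nat) (HV : is_value V) :
  set_eq_mod (taylor (lsubst x V M))
    (fun u => exists t vs, taylor M t /\ taylor V (RBag vs) /\ lin_subst t x vs u).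
Proof.
  intros s. split; intros [s' [Hr H]]; exists s'; split; auto.
  - apply main in H as [t [vs [A [B C]]]]; auto. exists t, vs. split; auto. split; auto.
    exists vs; auto.
  - destruct H as [t [vs [A [B [vs' [P C]]]]]]. apply main; auto. exists t, vs'.
    split; auto. split; auto. apply tv_perm with vs; auto.
Qed.
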